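(* Let $d\ge 3$, $\lambda>0$ with $\log d\lesssim\lambda\lesssim d$, $\rho_0=\log^{-c_0}d$ for a constant $c_0>0$, $\mu=\rho_0/(d+\lambda)$, and let $(a,b,c)$ solve \[ \dot a=a(24-16a-8r),\quad \dot b=8(1+\lambda)(1-r)b-16(1+\lambda)^2b^2,\quad \dot c=8(1-r)c-16c^2, \] with $r=a+(1+\lambda)b+(d-2)c$ and $a(0)=b(0)=c(0)=\mu$. Let $C=(d-2)c$, fix $\rho\in(0,1/12)$ and $\varepsilon\in(0,1/4]$, and define $T_{1a}=\inf\{t\ge0:r(t)\ge\rho\}$, $T_1=\inf\{t\ge T_{1a}:\dot b(t)\le0\}$, $T_{2a}=\inf\{t\ge T_1: r(t)\ge 1-\varepsilon\}$. Then, for $d$ large enough: (1) $T_{2a}-T_1=\Theta(\log(1/\rho_0))=\Theta(\log\log d)$; (2) $C(T_{2a})\ge\frac23-\varepsilon-o(1)$, and hence $c(T_{2a})=\Theta(1/d)$; (3) $a(T_{2a})=\mu\,\rho_0^{-O(1)}=\frac{\log^{O(1)}d}{d+\lambda}=o(1)$; (4) $\mathrm{Align}(T_{2a})\le O(\sqrt d\,a(T_{2a}))=o(1)$.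
   Context: This ODE is the population gradient flow of the phase-retrieval model $y=(x^\top w_\star)^2+\nu$, $x\sim\mathcal N(0,I_d+\lambda vv^\top)$ ($v\perp w_\star$ unit vectors), with network $f_W(x)=\sum_{j=1}^d(w_j^\top x)^2$, in the coordinates $WW^\top=a\,w_\star w_\star^\top+b\,vv^\top+c(I-w_\star w_\star^\top-vv^\top)$, started from $WW^\top=\mu I_d$. The alignment is $\mathrm{Align}(t)=a(t)/\sqrt{a(t)^2+b(t)^2+(d-2)c(t)^2}$. Asymptotic notation refers to $d\to\infty$ with $\varepsilon,\rho$ fixed. *)

(* Defs.v *)
From Stdlib Require Import Reals Lra.
Open Scope R_scope.

Definition rho0 (d : nat) (c0 : R) : R := Rpower (ln (INR d)) (- c0).
Definition mu (d : nat) (lam c0 : R) : R := rho0 d c0 / (INR d + lam).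

Definition rr (d : nat) (lam : R) (a b c : R -> R) (t : R) : R :=
  a t + (1 + lam) * b t + (INR d - 2) * c t.

Definition adot (d : nat) (lam : R) (a b c : R -> R) (t : R) : R :=
  a t * (24 - 16 * a t - 8 * rr d lam a b c t).
Definition bdot (d : nat) (lam : R) (a b c : R -> R) (t : R) : R :=
  8 * (1 + lam) * (1 - rr d lam a b c t) * b t - 16 * (1 + lam) ^ 2 * (b t) ^ 2.
Definition cdot (d : nat) (lam : R) (a b c : R -> R) (t : R) : R :=
  8 * (1 - rr d lam a b c t) * c t - 16 * (c t) ^ 2.

Definition solves (d : nat) (lam c0 : R) (a b c : R -> R) : Prop :=
  a 0 = mu d lam c0 /\ b 0 = mu d lam c0 /\ c 0 = mu d lam c0 /\
  forall t, 0 <= t ->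
    derivable_pt_lim a t (adot d lam a b c t) /\
    derivable_pt_lim b t (bdot d lam a b c t) /\
    derivable_pt_lim c t (cdot d lam a b c t).

(* x is the infimum of the set S (this forces S to be nonempty) *)
Definition is_inf (S : R -> Prop) (x : R) : Prop :=
  (forall y, S y -> x <= y) /\
  (forall z, (forall y, S y -> z <= y) -> z <= x).

Definition Align (d : nat) (a b c : R -> R) (t : R) : R :=
  a t / sqrt ((a t) ^ 2 + (b t) ^ 2 + (INR d - 2) * (c t) ^ 2).

(* Main.v *)
Require Import Defs.
From Stdlib Require Import Reals Lra Lia Classical FunctionalExtensionality.
Open Scope R_scope.

Lemma cont_nbhd f x eps : continuity_pt f x -> 0 < eps ->
  exists del, 0 < del /\ forall y, Rabs (y - x) < del -> Rabs (f y - f x) < eps.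
Proof.
  intros H He. destruct (H eps He) as [al [Hal Hy]].
  exists al; split; auto. intros y Hy'.
  destruct (Req_dec y x) as [->|Hne].
  - unfold Rminus; rewrite Rplus_opp_r, Rabs_R0; auto.
  - apply (Hy y). split; [split; [exact I| auto]|]. simpl. unfold R_dist. auto.
Qed.

Lemma ln_le_mono x y : 0 < x -> x <= y -> ln x <= ln y.
Proof. intros Hx [H|H]; [left; apply ln_increasing; auto| subst; lra]. Qed.

Lemma exp_le_mono x y : x <= y -> exp x <= exp y.
Proof. intros [H|H]; [left; apply exp_increasing; auto| subst; lra]. Qed.

Lemma ln_le_exp x y : 0 < x -> ln x <= y -> x <= exp y.
Proof. intros Hx H. rewrite <- (exp_ln x) by auto. apply exp_le_mono; auto. Qed.

Lemma exp_le_ln x y : 0 < y -> x <= ln y -> exp x <= y.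
Proof. intros Hy H. rewrite <- (exp_ln y) by auto. apply exp_le_mono; auto. Qed.

Lemma le_ln_of x y : 0 < y -> exp x <= y -> x <= ln y.
Proof. intros Hy H. rewrite <- (ln_exp x). apply ln_le_mono; auto. apply exp_pos. Qed.

Lemma ln_le_of x y : 0 < x -> x <= exp y -> ln x <= y.
Proof. intros Hx H. rewrite <- (ln_exp y). apply ln_le_mono; auto. Qed.

Lemma ln_le_lin y k : 0 < y -> 0 < k -> ln y <= ln k + y / k.
Proof.
  intros Hy Hk. assert (H := exp_ineq1_le (ln y - ln k)).
  assert (exp (ln y - ln k) = y / k).
  { unfold Rminus; rewrite exp_plus, exp_Ropp, !exp_ln; auto. }
  rewrite H0 in H. assert (0 < y / k) by (apply Rdiv_lt_0_compat; auto).
  lra.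
Qed.

Lemma dlin (a b c : R -> R) k0 k1 k2 k3 t la lb lc :
  derivable_pt_lim a t la -> derivable_pt_lim b t lb -> derivable_pt_lim c t lc ->
  derivable_pt_lim (fun u => k0 + k1 * a u + k2 * b u + k3 * c u) t (k1*la + k2*lb + k3*lc).
Proof.
  intros Ha Hb Hc.
  replace (k1*la + k2*lb + k3*lc) with (((0 + k1*la) + k2*lb) + k3*lc) by ring.
  apply (derivable_pt_lim_plus (fct_cte k0 + mult_real_fct k1 a + mult_real_fct k2 b)%F
     (mult_real_fct k3 c)).
  2: apply derivable_pt_lim_scal; auto.
  apply derivable_pt_lim_plus. 2: apply derivable_pt_lim_scal; auto.
  apply derivable_pt_lim_plus. apply derivable_pt_lim_const. apply derivable_pt_lim_scal; auto.
Qed.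

Lemma dext f g x l : (forall u, f u = g u) -> derivable_pt_lim f x l -> derivable_pt_lim g x l.
Proof. intros H. replace g with f; auto. apply functional_extensionality; auto. Qed.

Lemma dval f x l l' : l = l' -> derivable_pt_lim f x l -> derivable_pt_lim f x l'.
Proof. intros ->; auto. Qed.

Lemma dcont f x l : derivable_pt_lim f x l -> continuity_pt f x.
Proof. intros H. apply derivable_continuous_pt. exists l. exact H. Qed.

Lemma dln f x l : 0 < f x -> derivable_pt_lim f x l ->
  derivable_pt_lim (fun u => ln (f u)) x (l / f x).
Proof.
  intros Hp H. replace (l / f x) with (/ f x * l) by (field; lra).
  apply (derivable_pt_lim_comp f ln). auto. apply derivable_pt_lim_ln; auto.
Qed.

Lemma mvt_le f f' s t K : s <= t ->
  (forall u, s <= u <= t -> derivable_pt_lim f u (f' u)) ->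
  (forall u, s < u < t -> f' u <= K) -> f t - f s <= K * (t - s).
Proof.
  intros [Hst|Hst] Hd Hb.
  - destruct (MVT_cor2 f f' s t Hst Hd) as [c [Hc Hc2]]. rewrite Hc.
    apply Rmult_le_compat_r; [lra| apply Hb; auto].
  - subst. lra.
Qed.

Lemma mvt_ge f f' s t K : s <= t ->
  (forall u, s <= u <= t -> derivable_pt_lim f u (f' u)) ->
  (forall u, s < u < t -> K <= f' u) -> K * (t - s) <= f t - f s.
Proof.
  intros [Hst|Hst] Hd Hb.
  - destruct (MVT_cor2 f f' s t Hst Hd) as [c [Hc Hc2]]. rewrite Hc.
    apply Rmult_le_compat_r; [lra| apply Hb; auto].
  - subst. lra.
Qed.

Lemma mvt_gt f f' s t : s < t ->
  (forall u, s <= u <= t -> derivable_pt_lim f u (f' u)) ->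
  (forall u, s < u < t -> 0 < f' u) -> f s < f t.
Proof.
  intros Hst Hd Hb.
  destruct (MVT_cor2 f f' s t Hst Hd) as [c [Hc Hc2]].
  assert (0 < f' c * (t - s)) by (apply Rmult_lt_0_compat; [apply Hb; auto| lra]). lra.
Qed.

Lemma growth_le x x' s t K : s <= t ->
  (forall u, s <= u <= t -> 0 < x u /\ derivable_pt_lim x u (x' u)) ->
  (forall u, s < u < t -> x' u <= K * x u) -> ln (x t) - ln (x s) <= K * (t - s).
Proof.
  intros Hst Hd Hb.
  apply (mvt_le (fun u => ln (x u)) (fun u => x' u / x u)); auto.
  - intros u Hu. destruct (Hd u Hu). apply dln; auto.
  - intros u Hu. destruct (Hd u ltac:(lra)) as [Hp _]. specialize (Hb u Hu).
    apply (Rmult_le_reg_r (x u)); auto. unfold Rdiv. rewrite Rmult_assoc, Rinv_l; lra.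
Qed.

Lemma growth_ge x x' s t K : s <= t ->
  (forall u, s <= u <= t -> 0 < x u /\ derivable_pt_lim x u (x' u)) ->
  (forall u, s < u < t -> K * x u <= x' u) -> K * (t - s) <= ln (x t) - ln (x s).
Proof.
  intros Hst Hd Hb.
  apply (mvt_ge (fun u => ln (x u)) (fun u => x' u / x u)); auto.
  - intros u Hu. destruct (Hd u Hu). apply dln; auto.
  - intros u Hu. destruct (Hd u ltac:(lra)) as [Hp _]. specialize (Hb u Hu).
    apply (Rmult_le_reg_r (x u)); auto. unfold Rdiv. rewrite Rmult_assoc, Rinv_l; lra.
Qed.

Lemma inf_exists (S : R -> Prop) m : (exists y, S y) -> (forall y, S y -> m <= y) ->
  exists x, is_inf S x.
Proof.
  intros [y0 Hy0] Hm.
  destruct (completeness (fun z => S (- z))) as [M [HM1 HM2]].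
  - exists (- m). intros z Hz. specialize (Hm _ Hz). lra.
  - exists (- y0). rewrite Ropp_involutive. auto.
  - exists (- M). split.
    + intros y Hy. assert (- y <= M) by (apply HM1; rewrite Ropp_involutive; auto). lra.
    + intros z Hz. assert (M <= - z). { apply HM2. intros w Hw. specialize (Hz _ Hw). lra. } lra.
Qed.

Lemma inf_near S x del : is_inf S x -> 0 < del -> exists y, S y /\ x <= y < x + del.
Proof.
  intros [H1 H2] Hd. apply NNPP. intro Hn.
  assert (x + del <= x); [|lra].
  apply H2. intros y Hy. destruct (Rlt_or_le y (x + del)); auto.
  exfalso; apply Hn; exists y; split; [auto | split; [apply H1; auto | auto]].
Qed.

Lemma inf_closed S x f K : is_inf S x -> (forall y, S y -> K <= f y) -> continuity_pt f x ->
  K <= f x.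
Proof.
  intros Hi HS Hc. destruct (Rlt_or_le (f x) K) as [Hlt|]; auto. exfalso.
  destruct (cont_nbhd f x (K - f x) Hc ltac:(lra)) as [del [Hdel Hn]].
  destruct (inf_near S x del Hi Hdel) as [y [Hy Hy2]].
  specialize (HS y Hy). specialize (Hn y ltac:(apply Rabs_def1; lra)).
  apply Rabs_def2 in Hn. lra.
Qed.

Lemma sup_closed S s f K : is_lub S s -> (forall y, S y -> K <= f y) -> continuity_pt f s ->
  K <= f s.
Proof.
  intros [H1 H2] HS Hc. destruct (Rlt_or_le (f s) K) as [Hlt|]; auto. exfalso.
  destruct (cont_nbhd f s (K - f s) Hc ltac:(lra)) as [del [Hdel Hn]].
  assert (s <= s - del/2); [|lra].
  apply H2. intros y Hy. destruct (Rlt_or_le (s - del/2) y) as [Hl|]; auto.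
  specialize (H1 y Hy). specialize (HS y Hy). specialize (Hn y ltac:(apply Rabs_def1; lra)).
  apply Rabs_def2 in Hn. lra.
Qed.

Lemma left_le f x x0 K : continuity_pt f x -> x0 < x -> (forall t, x0 < t < x -> f t <= K) -> f x <= K.
Proof.
  intros Hc Hx H. destruct (Rle_or_lt (f x) K) as [|Hlt]; auto. exfalso.
  destruct (cont_nbhd f x (f x - K) Hc ltac:(lra)) as [del [Hdel Hn]].
  set (t := x - Rmin del (x - x0) / 2).
  assert (Rmin del (x - x0) <= del) by apply Rmin_l.
  assert (Rmin del (x - x0) <= x - x0) by apply Rmin_r.
  assert (0 < Rmin del (x - x0)) by (apply Rmin_pos; lra).
  specialize (H t ltac:(unfold t; lra)). specialize (Hn t ltac:(apply Rabs_def1; unfold t; lra)).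
  apply Rabs_def2 in Hn. lra.
Qed.

Lemma left_ge f x x0 K : continuity_pt f x -> x0 < x -> (forall t, x0 < t < x -> K <= f t) -> K <= f x.
Proof.
  intros Hc Hx H. destruct (Rle_or_lt K (f x)) as [|Hlt]; auto. exfalso.
  destruct (cont_nbhd f x (K - f x) Hc ltac:(lra)) as [del [Hdel Hn]].
  set (t := x - Rmin del (x - x0) / 2).
  assert (Rmin del (x - x0) <= del) by apply Rmin_l.
  assert (Rmin del (x - x0) <= x - x0) by apply Rmin_r.
  assert (0 < Rmin del (x - x0)) by (apply Rmin_pos; lra).
  specialize (H t ltac:(unfold t; lra)). specialize (Hn t ltac:(apply Rabs_def1; unfold t; lra)).
  apply Rabs_def2 in Hn. lra.
Qed.

Lemma pos_ode x g : 0 < x 0 ->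
  (forall t, 0 <= t -> derivable_pt_lim x t (x t * g t)) ->
  (forall t, 0 <= t -> continuity_pt g t) -> forall t, 0 <= t -> 0 < x t.
Proof.
  intros H0 Hd Hg t1 Ht1. apply NNPP; intro Hn. apply Rnot_lt_le in Hn.
  destruct (inf_exists (fun t => 0 <= t /\ x t <= 0) 0) as [t0 Hi].
  { exists t1; auto. } { intros y [Hy _]; auto. }
  assert (Ht0 : 0 <= t0). { apply (proj2 Hi). intros y [Hy _]; auto. }
  assert (Hxt0 : 0 <= - x t0).
  { apply (inf_closed _ t0 (fun t => - x t) 0 Hi).
    - intros y [_ Hy]; lra.
    - apply continuity_pt_opp. apply (dcont _ _ _ (Hd t0 Ht0)). }
  assert (Hpos : forall u, 0 <= u < t0 -> 0 < x u).
  { intros u [Hu1 Hu2]. apply NNPP; intro Hn'. apply Rnot_lt_le in Hn'.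
    assert (t0 <= u) by (apply (proj1 Hi); auto). lra. }
  assert (Hgt0 : 0 < t0).
  { destruct Ht0 as [|<-]; auto. lra. }
  destruct (cont_nbhd g t0 1 (Hg t0 Ht0) ltac:(lra)) as [del [Hdel Hn1]].
  set (M := Rabs (g t0) + 1).
  set (s := t0 - Rmin del t0 / 2).
  assert (Rmin del t0 <= del) by apply Rmin_l.
  assert (Rmin del t0 <= t0) by apply Rmin_r.
  assert (0 < Rmin del t0) by (apply Rmin_pos; lra).
  assert (Hs : 0 <= s < t0) by (unfold s; lra).
  assert (Hxs := Hpos s Hs).
  assert (Hb : forall u, s < u < t0 -> exp (ln (x s) - M * (t0 - s)) <= x u).
  { intros u Hu. apply exp_le_ln. apply Hpos; lra.
    assert (- M * (u - s) <= ln (x u) - ln (x s)).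
    { apply (growth_ge x (fun v => x v * g v)). lra.
      - intros v Hv. split. apply Hpos; lra. apply Hd; lra.
      - intros v Hv. specialize (Hn1 v ltac:(apply Rabs_def1; unfold s in *; lra)).
        apply Rabs_def2 in Hn1. assert (0 < x v) by (apply Hpos; lra).
        assert (-M <= g v).
        { unfold M. assert (H' := Rabs_pos (g t0)). assert (H'' := Rle_abs (- g t0)).
          rewrite Rabs_Ropp in H''. lra. }
        rewrite (Rmult_comm (x v)). apply Rmult_le_compat_r; lra. }
    assert (0 <= M) by (unfold M; assert (H' := Rabs_pos (g t0)); lra).
    assert (M * (u - s) <= M * (t0 - s)) by (apply Rmult_le_compat_l; lra). lra. }
  assert (exp (ln (x s) - M * (t0 - s)) <= x t0).
  { apply (left_ge x t0 s). apply (dcont _ _ _ (Hd t0 Ht0)). lra. auto. }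
  assert (H' := exp_pos (ln (x s) - M * (t0 - s))). lra.
Qed.

Definition ev (P : nat -> Prop) := exists D : nat, forall d, (D <= d)%nat -> P d.

Lemma ev_and P Q : ev P -> ev Q -> ev (fun d => P d /\ Q d).
Proof.
  intros [D1 H1] [D2 H2]. exists (Nat.max D1 D2). intros d Hd. split.
  apply H1; lia. apply H2; lia.
Qed.

Lemma ev_imp (P Q : nat -> Prop) : (forall d, P d -> Q d) -> ev P -> ev Q.
Proof. intros H [D HD]. exists D. auto. Qed.

Lemma ev1 X : ev (fun d => X <= INR d).
Proof.
  destruct (INR_unbounded X) as [n Hn]. exists n. intros d Hd.
  apply le_INR in Hd. lra.
Qed.

Lemma ev2 X : ev (fun d => X <= ln (INR d)).
Proof.
  apply (ev_imp (fun d => exp X <= INR d)); [|apply ev1].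
  intros d Hd. apply le_ln_of; auto. assert (H := exp_pos X); lra.
Qed.

Lemma ev3 X : ev (fun d => X <= ln (ln (INR d))).
Proof.
  apply (ev_imp (fun d => exp X <= ln (INR d))); [|apply ev2].
  intros d Hd. apply le_ln_of; auto. assert (H := exp_pos X); lra.
Qed.

Lemma ev4 A P B : 0 < P -> 0 < B -> ev (fun d => A + P * ln (ln (INR d)) <= B * ln (INR d)).
Proof.
  intros HP HB. set (k := 2 * P / B).
  assert (Hk : 0 < k) by (unfold k; apply Rdiv_lt_0_compat; lra).
  apply (ev_imp (fun d => 1 <= ln (INR d) /\ 2 * (A + P * ln k) / B <= ln (INR d)));
    [|apply ev_and; apply ev2].
  intros d [H1 H2]. set (y := ln (INR d)) in *.
  assert (Hl := ln_le_lin y k ltac:(lra) Hk).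
  assert (P * ln y <= P * ln k + P * (y / k)) by (rewrite <- Rmult_plus_distr_l; apply Rmult_le_compat_l; lra).
  assert (P * (y / k) = B * y / 2) by (unfold k; field; lra).
  assert (2 * (A + P * ln k) <= B * y).
  { apply (Rmult_le_compat_l B) in H2; [|lra]. unfold Rdiv in H2.
    replace (B * (2 * (A + P * ln k) * / B)) with (2 * (A + P * ln k)) in H2 by (field; lra). lra. }
  lra.
Qed.

Record Hyp (d : nat) (lam c0 rho eps K1 K2 : R) (a b c : R -> R) : Prop := {
  h_sol : solves d lam c0 a b c;
  h_d : 3 <= INR d;
  h_lam : 0 < lam;
  h_K1 : 0 < K1;
  h_K2 : 0 < K2;
  h_lamlo : K1 * ln (INR d) <= lam;
  h_lamhi : lam <= K2 * INR d;
  h_c0 : 0 < c0;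
  h_rho : 0 < rho < 1/12;
  h_eps : 0 < eps <= 1/4;
  h_x : 1 <= ln (INR d);
  h_c2 : ln (1 + K2) + ln (INR d) + c0 * ln (ln (INR d)) <= 6 * ln (INR d);
  h_c3 : 4 * rho0 d c0 * exp (24 * (/ K1 + 2)) <= rho;
  h_c4 : 4 / (INR d - 2) <= Rmin rho eps;
  h_c5 : ln (3 * (1 + K2)) - ln (4 * rho) + c0 * ln (ln (INR d)) <= 12 * K1 * rho * ln (INR d);
  h_c6 : ln (3 * (1 + K2)) <= c0 * ln (ln (INR d));
  h_c7 : 36 / eps <= K1 * ln (INR d);
  h_c9 : ln 3 + 8 * (/ K1 + 2) <= c0 * ln (ln (INR d)) / 2
}.



Lemma rho0_eq d c0 : rho0 d c0 = exp (- c0 * ln (ln (INR d))).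
Proof. reflexivity. Qed.

Lemma basics d lam c0 rho eps K1 K2 a b c : Hyp d lam c0 rho eps K1 K2 a b c ->
  1 <= INR d - 2 /\ INR d - 2 <= INR d + lam /\ 0 < rho0 d c0 <= 1 /\
  0 < mu d lam c0 <= rho0 d c0 / INR d /\
  rho0 d c0 / (3 * (1 + K2)) <= (INR d - 2) * mu d lam c0 <= rho0 d c0 /\
  0 <= ln (ln (INR d)) /\ ln (rho0 d c0) = - c0 * ln (ln (INR d)) /\
  ln (INR d + lam) <= ln (1 + K2) + ln (INR d) /\
  0 < rho0 d c0 < rho.
Proof.
  intros HS. destruct HS.
  assert (Hlx : 0 <= ln (ln (INR d))).
  { rewrite <- ln_1. apply ln_le_mono; lra. }
  assert (Hr0 : 0 < rho0 d c0 <= 1).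
  { rewrite rho0_eq. split. apply exp_pos. rewrite <- exp_0. apply exp_le_mono.
    assert (0 <= c0 * ln (ln (INR d))) by (apply Rmult_le_pos; lra). lra. }
  assert (HdL : INR d <= INR d + lam) by lra.
  assert (Hmu : mu d lam c0 = rho0 d c0 / (INR d + lam)) by reflexivity.
  assert (Hmu2 : 0 < mu d lam c0 <= rho0 d c0 / INR d).
  { rewrite Hmu. split. apply Rdiv_lt_0_compat; lra.
    unfold Rdiv. apply Rmult_le_compat_l. lra. apply Rinv_le_contravar; lra. }
  assert (Hx3 : 0 < exp (24 * (/ K1 + 2))) by apply exp_pos.
  repeat split; try lra.
  - rewrite Hmu. apply (Rmult_le_reg_r (3 * (1 + K2) * (INR d + lam))).
    apply Rmult_lt_0_compat; lra.
    replace (rho0 d c0 / (3 * (1 + K2)) * (3 * (1 + K2) * (INR d + lam))) with (rho0 d c0 * (INR d + lam)) by (field; lra).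
    replace ((INR d - 2) * (rho0 d c0 / (INR d + lam)) * (3 * (1 + K2) * (INR d + lam))) with
      (rho0 d c0 * ((INR d - 2) * (3 * (1 + K2)))) by (field; lra).
    apply Rmult_le_compat_l; [lra|]. nra.
  - rewrite Hmu. replace ((INR d - 2) * (rho0 d c0 / (INR d + lam))) with (rho0 d c0 * ((INR d - 2) / (INR d + lam))) by (field; lra).
    rewrite <- Rmult_1_r. apply Rmult_le_compat_l. lra.
    apply (Rmult_le_reg_r (INR d + lam)). lra. unfold Rdiv. rewrite Rmult_assoc, Rinv_l; lra.
  - rewrite rho0_eq, ln_exp. auto.
  - rewrite <- ln_mult by lra. apply ln_le_mono; nra.
  - assert (0 < 4 * exp (24 * (/ K1 + 2))) by lra.
    assert (1 <= exp (24 * (/ K1 + 2))).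
    { rewrite <- exp_0. apply exp_le_mono. assert (0 < / K1) by (apply Rinv_0_lt_compat; lra). lra. }
    nra.
Qed.

Lemma derivs d lam c0 a b c : solves d lam c0 a b c -> forall t, 0 <= t ->
  derivable_pt_lim (rr d lam a b c) t
     (adot d lam a b c t + (1 + lam) * bdot d lam a b c t + (INR d - 2) * cdot d lam a b c t) /\
  derivable_pt_lim (fun u => 1 - rr d lam a b c u - 2 * ((1 + lam) * b u)) t
     (- adot d lam a b c t - 3 * (1 + lam) * bdot d lam a b c t - (INR d - 2) * cdot d lam a b c t).
Proof.
  intros [_ [_ [_ Hd]]] t Ht. destruct (Hd t Ht) as [Ha [Hb Hc]]. split.
  - eapply dval; [|eapply dext; [|apply (dlin a b c 0 1 (1+lam) (INR d - 2) t _ _ _ Ha Hb Hc)]].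
    ring. intros u; unfold rr; ring.
  - eapply dval; [|eapply dext; [|apply (dlin a b c 1 (-1) (-3*(1+lam)) (-(INR d - 2)) t _ _ _ Ha Hb Hc)]].
    ring. intros u; unfold rr; ring.
Qed.

Lemma positivity d lam c0 a b c : solves d lam c0 a b c -> 0 < mu d lam c0 ->
  forall t, 0 <= t -> 0 < a t /\ 0 < b t /\ 0 < c t.
Proof.
  intros Hs Hmu. pose proof Hs as [Ha0 [Hb0 [Hc0 Hd]]].
  assert (Hcont : forall k0 k1 k2 k3 (f : R -> R), (forall u, f u = k0 + k1 * a u + k2 * b u + k3 * c u) ->
     forall t, 0 <= t -> continuity_pt f t).
  { intros k0 k1 k2 k3 f Hf t Ht. destruct (Hd t Ht) as [Ha [Hb Hc]].
    apply (dcont _ _ _ (dext _ _ _ _ (fun u => eq_sym (Hf u)) (dlin a b c k0 k1 k2 k3 t _ _ _ Ha Hb Hc))). }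
  intros t Ht. split; [|split].
  - apply (pos_ode a (fun u => 24 - 16 * a u - 8 * rr d lam a b c u)); auto. lra.
    + intros s Hs'. apply (Hd s Hs').
    + apply (Hcont 24 (-24) (-8*(1+lam)) (-8*(INR d - 2))). intros; unfold rr; ring.
  - apply (pos_ode b (fun u => 8 * (1 + lam) * (1 - rr d lam a b c u) - 16 * (1 + lam)^2 * b u)); auto. lra.
    + intros s Hs'. eapply dval; [|apply (Hd s Hs')]. unfold bdot; ring.
    + apply (Hcont (8*(1+lam)) (-8*(1+lam)) (-8*(1+lam)*(1+lam) - 16*(1+lam)^2) (-8*(1+lam)*(INR d - 2))).
      intros; unfold rr; ring.
  - apply (pos_ode c (fun u => 8 * (1 - rr d lam a b c u) - 16 * c u)); auto. lra.
    + intros s Hs'. eapply dval; [|apply (Hd s Hs')]. unfold cdot; ring.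
    + apply (Hcont 8 (-8) (-8*(1+lam)) (-8*(INR d - 2) - 16)).
      intros; unfold rr; ring.
Qed.

Lemma pw d lam c0 rho eps K1 K2 a b c : Hyp d lam c0 rho eps K1 K2 a b c ->
  forall u, 0 <= u ->
  let r := rr d lam a b c in
  let g := 1 - r u - 2 * ((1 + lam) * b u) in
  0 < a u /\ 0 < b u /\ 0 < c u /\
  a u <= r u /\ (1 + lam) * b u <= r u /\ (INR d - 2) * c u <= r u /\
  adot d lam a b c u <= 24 * a u /\ cdot d lam a b c u <= 8 * c u /\
  bdot d lam a b c u = 8 * (1 + lam) * b u * g /\
  (r u <= 1 -> 0 <= adot d lam a b c u /\ 16 * c u <= 4 * Rmin rho eps) /\
  (r u <= 1 -> Rmin rho eps <= 1 - r u -> 4 * Rmin rho eps * c u <= cdot d lam a b c u) /\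
  (r u <= 1 -> rho <= 1 - r u -> 4 * rho * c u <= cdot d lam a b c u).
Proof.
  intros HS u Hu r g.
  pose proof (basics _ _ _ _ _ _ _ _ _ _ HS) as Hb.
  pose proof HS as [Hsol Hd Hlam HK1 HK2 Hlo Hhi Hc0 Hrho Heps Hx Hc2 Hc3 Hc4 Hc5 Hc6 Hc7 Hc9].
  destruct (positivity _ _ _ _ _ _ Hsol ltac:(lra) u Hu) as [Ha [Hbp Hc]].
  assert (HL : 0 < (1 + lam) * b u) by (apply Rmult_lt_0_compat; lra).
  assert (HC : 0 < (INR d - 2) * c u) by (apply Rmult_lt_0_compat; lra).
  assert (Hr : r u = a u + (1 + lam) * b u + (INR d - 2) * c u) by reflexivity.
  assert (Hk : 0 < Rmin rho eps) by (apply Rmin_pos; lra).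
  assert (Hcn : forall z, r u <= z -> c u <= z / (INR d - 2)).
  { intros z Hz. apply (Rmult_le_reg_l (INR d - 2)). lra.
    replace ((INR d - 2) * (z / (INR d - 2))) with z by (field; lra). lra. }
  assert (H16 : r u <= 1 -> 16 * c u <= 4 * Rmin rho eps).
  { intros H1. specialize (Hcn 1 H1).
    assert (4 * (1 / (INR d - 2)) <= Rmin rho eps) by (unfold Rdiv in *; lra). lra. }
  unfold adot, bdot, cdot; fold r.
  repeat split; try lra.
  - nra.
  - nra.
  - unfold g. ring.
  - nra.
  - intros H1 H2. specialize (H16 H1). nra.
  - intros H1 H2. specialize (H16 H1). assert (Rmin rho eps <= rho) by apply Rmin_l. nra.
Qed.

Lemma global_growth d lam c0 rho eps K1 K2 a b c : Hyp d lam c0 rho eps K1 K2 a b c ->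
  forall t, 0 <= t ->
  a t <= mu d lam c0 * exp (24 * t) /\ (INR d - 2) * c t <= rho0 d c0 * exp (8 * t) /\
  (forall s, 0 <= s <= t -> ln (c t) - ln (c s) <= 8 * (t - s)).
Proof.
  intros HS t Ht.
  pose proof (basics _ _ _ _ _ _ _ _ _ _ HS) as Hb.
  pose proof HS as [Hsol Hd Hlam HK1 HK2 Hlo Hhi Hc0 Hrho Heps Hx Hc2 Hc3 Hc4 Hc5 Hc6 Hc7 Hc9].
  pose proof Hsol as [Ha0 [Hb0 [Hcc0 Hder]]].
  assert (Hgc : forall s, 0 <= s <= t -> ln (c t) - ln (c s) <= 8 * (t - s)).
  { intros s Hs. apply (growth_le c (cdot d lam a b c)). lra.
    - intros v Hv. split. apply (pw _ _ _ _ _ _ _ _ _ _ HS v ltac:(lra)). apply (Hder v ltac:(lra)).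
    - intros v Hv. apply (pw _ _ _ _ _ _ _ _ _ _ HS v ltac:(lra)). }
  split; [|split; auto].
  - assert (ln (a t) - ln (a 0) <= 24 * (t - 0)).
    { apply (growth_le a (adot d lam a b c)). lra.
      - intros v Hv. split. apply (pw _ _ _ _ _ _ _ _ _ _ HS v ltac:(lra)). apply (Hder v ltac:(lra)).
      - intros v Hv. apply (pw _ _ _ _ _ _ _ _ _ _ HS v ltac:(lra)). }
    rewrite Ha0 in H. assert (H' : ln (a t) <= ln (mu d lam c0) + 24 * t) by lra.
    apply ln_le_exp in H'. 2: apply (pw _ _ _ _ _ _ _ _ _ _ HS t Ht).
    rewrite exp_plus, exp_ln in H' by lra. lra.
  - assert (H0 := Hgc 0 ltac:(lra)). rewrite Hcc0 in H0.
    assert (H : ln (c t) <= ln (mu d lam c0) + 8 * (t - 0)) by lra.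
    apply ln_le_exp in H. 2: apply (pw _ _ _ _ _ _ _ _ _ _ HS t Ht).
    rewrite exp_plus, exp_ln in H by lra.
    assert (0 <= INR d - 2) by lra.
    apply (Rmult_le_compat_l (INR d - 2)) in H; auto.
    assert (0 < exp (8 * (t - 0))) by apply exp_pos.
    replace (t - 0) with t in * by ring. nra.
Qed.

Lemma ln_mu d lam c0 : 0 < rho0 d c0 -> 0 < INR d + lam ->
  ln (mu d lam c0) = ln (rho0 d c0) - ln (INR d + lam).
Proof.
  intros H1 H2. unfold mu, Rdiv. rewrite ln_mult, ln_Rinv; auto. apply Rinv_0_lt_compat; auto.
Qed.

Lemma le_div_inv K t : 0 < K -> K * t <= 1 -> t <= / K.
Proof.
  intros HK H. apply (Rmult_le_reg_l K); auto. rewrite Rinv_r; lra.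
Qed.

Lemma phaseA d lam c0 rho eps K1 K2 a b c : Hyp d lam c0 rho eps K1 K2 a b c ->
  forall t, 0 < t -> (forall u, 0 <= u <= t -> rr d lam a b c u < rho) -> t <= / K1.
Proof.
  intros HS t Ht Hr.
  pose proof (basics _ _ _ _ _ _ _ _ _ _ HS) as Hb.
  pose proof HS as [Hsol Hd Hlam HK1 HK2 Hlo Hhi Hc0 Hrho Heps Hx Hc2 Hc3 Hc4 Hc5 Hc6 Hc7 Hc9].
  pose proof Hsol as [Ha0 [Hb0 [Hcc0 Hder]]].
  set (L := 1 + lam) in *.
  assert (H1 : 6 * L * (t - 0) <= ln (b t) - ln (b 0)).
  { apply (growth_ge b (bdot d lam a b c)). lra.
    - intros v Hv. split. apply (pw _ _ _ _ _ _ _ _ _ _ HS v ltac:(lra)). apply (Hder v ltac:(lra)).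
    - intros v Hv. destruct (pw _ _ _ _ _ _ _ _ _ _ HS v ltac:(lra)) as (Hav & Hbv & Hcv & H1 & H2 & H3 & _ & _ & Hbd & _).
      specialize (Hr v ltac:(lra)). rewrite Hbd.
      assert (0 < 8 * L * b v) by (apply Rmult_lt_0_compat; [unfold L|]; lra).
      assert (1 - rr d lam a b c v - 2 * (L * b v) >= 3/4) by (unfold L in *; lra).
      fold L. assert (8 * L * b v * (1 - rr d lam a b c v - 2 * (L * b v)) >= 8 * L * b v * (3/4)) by (apply Rmult_ge_compat_l; lra).
      lra. }
  destruct (pw _ _ _ _ _ _ _ _ _ _ HS t ltac:(lra)) as (Hat & Hbt & Hct & H1t & H2t & H3t & _).
  specialize (Hr t ltac:(lra)).
  assert (Hlbt : ln (b t) <= 0).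
  { rewrite <- ln_1. apply ln_le_mono; auto. unfold L in *; nra. }
  rewrite Hb0, ln_mu in H1 by lra.
  assert (6 * L * t <= 6 * ln (INR d)) by lra.
  assert (L * t <= ln (INR d)) by lra.
  assert (K1 * ln (INR d) * t <= L * t) by (apply Rmult_le_compat_r; unfold L; lra).
  apply le_div_inv; auto.
  apply (Rmult_le_reg_r (ln (INR d))). lra. nra.
Qed.

Lemma r0 d lam c0 a b c : solves d lam c0 a b c -> 0 < INR d + lam ->
  rr d lam a b c 0 = rho0 d c0.
Proof.
  intros [Ha0 [Hb0 [Hc0 _]]] H. unfold rr. rewrite Ha0, Hb0, Hc0. unfold mu. field. lra.
Qed.

Lemma T1a_props d lam c0 rho eps K1 K2 a b c : Hyp d lam c0 rho eps K1 K2 a b c ->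
  exists T1a, is_inf (fun t => 0 <= t /\ rho <= rr d lam a b c t) T1a /\
    0 < T1a <= / K1 /\ (forall u, 0 <= u < T1a -> rr d lam a b c u < rho) /\
    rho / 2 <= (1 + lam) * b T1a /\ rr d lam a b c T1a <= rho.
Proof.
  intros HS.
  pose proof (basics _ _ _ _ _ _ _ _ _ _ HS) as Hb.
  pose proof HS as [Hsol Hd Hlam HK1 HK2 Hlo Hhi Hc0 Hrho Heps Hx Hc2 Hc3 Hc4 Hc5 Hc6 Hc7 Hc9].
  assert (HiK : 0 < / K1) by (apply Rinv_0_lt_compat; lra).
  destruct (inf_exists (fun t => 0 <= t /\ rho <= rr d lam a b c t) 0) as [T Hi].
  { apply NNPP; intro Hn.
    assert (/ K1 + 1 <= / K1); [|lra].
    apply (phaseA _ _ _ _ _ _ _ _ _ _ HS). lra.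
    intros u Hu. apply Rnot_le_lt. intro H'. apply Hn. exists u. split; [lra|auto]. }
  { intros y [Hy _]; auto. }
  assert (HT0 : 0 <= T) by (apply (proj2 Hi); intros y [Hy _]; auto).
  assert (Hcont : forall t, 0 <= t -> continuity_pt (rr d lam a b c) t).
  { intros t Ht. apply (dcont _ _ _ (proj1 (derivs _ _ _ _ _ _ Hsol t Ht))). }
  assert (HrT : rho <= rr d lam a b c T).
  { apply (inf_closed _ T (rr d lam a b c) rho Hi). intros y [_ Hy]; auto. apply Hcont; auto. }
  assert (Hbel : forall u, 0 <= u < T -> rr d lam a b c u < rho).
  { intros u Hu. apply Rnot_le_lt. intro H'. assert (T <= u) by (apply (proj1 Hi); split; lra). lra. }
  assert (HTpos : 0 < T).
  { destruct HT0 as [|<-]; auto. rewrite (r0 d lam c0 a b c Hsol) in HrT; lra. }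
  assert (HTK : T <= / K1).
  { apply Rnot_lt_le. intro Hlt.
    assert ((T + / K1) / 2 <= / K1); [|lra].
    apply (phaseA _ _ _ _ _ _ _ _ _ _ HS). lra.
    intros u Hu. apply Hbel. lra. }
  assert (HrT2 : rr d lam a b c T <= rho).
  { apply (left_le (rr d lam a b c) T 0). apply Hcont; lra. auto. intros t Ht. left. apply Hbel. lra. }
  exists T. split; [exact Hi|]. split; [lra|]. split; [exact Hbel|]. split; [|exact HrT2].
  destruct (global_growth _ _ _ _ _ _ _ _ _ _ HS T ltac:(lra)) as [Ha [Hc _]].
  assert (exp (24 * T) <= exp (24 * (/ K1 + 2))) by (apply exp_le_mono; lra).
  assert (exp (8 * T) <= exp (24 * (/ K1 + 2))) by (apply exp_le_mono; lra).
  assert (HrT' : rr d lam a b c T = a T + (1 + lam) * b T + (INR d - 2) * c T) by reflexivity.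
  assert (mu d lam c0 * exp (24 * T) <= rho0 d c0 * exp (24 * (/ K1 + 2))).
  { apply Rmult_le_compat. lra. left; apply exp_pos.
    apply (Rle_trans _ (rho0 d c0 / INR d)). lra.
    unfold Rdiv. rewrite <- Rmult_1_r. apply Rmult_le_compat_l. lra.
    rewrite <- Rinv_1. apply Rinv_le_contravar; lra. auto. }
  assert (rho0 d c0 * exp (8 * T) <= rho0 d c0 * exp (24 * (/ K1 + 2))) by (apply Rmult_le_compat_l; lra).
  lra.
Qed.

Definition gg d lam (a b c : R -> R) := fun u => 1 - rr d lam a b c u - 2 * ((1 + lam) * b u).

Lemma ln_le_inv x y : 0 < x -> 0 < y -> ln x <= ln y -> x <= y.
Proof.
  intros Hx Hy H. destruct (Rle_or_lt x y) as [|Hlt]; auto.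
  assert (ln y < ln x) by (apply ln_increasing; auto). lra.
Qed.

Lemma goodB d lam c0 rho eps K1 K2 a b c T1a : Hyp d lam c0 rho eps K1 K2 a b c ->
  0 < T1a -> rho / 2 <= (1 + lam) * b T1a ->
  forall u, T1a <= u -> (forall v, T1a <= v <= u -> 0 < gg d lam a b c v) ->
  rho / 2 <= (1 + lam) * b u /\ rr d lam a b c u < 1 /\ rho <= 1 - rr d lam a b c u.
Proof.
  intros HS HT HB u Hu Hg.
  pose proof HS as [Hsol Hd Hlam HK1 HK2 Hlo Hhi Hc0 Hrho Heps Hx Hc2 Hc3 Hc4 Hc5 Hc6 Hc7 Hc9].
  pose proof Hsol as [Ha0 [Hb0 [Hcc0 Hder]]].
  assert (0 * (u - T1a) <= b u - b T1a).
  { apply (mvt_ge b (bdot d lam a b c)); auto.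
    - intros v Hv. apply (Hder v ltac:(lra)).
    - intros v Hv. destruct (pw _ _ _ _ _ _ _ _ _ _ HS v ltac:(lra)) as (Hav & Hbv & Hcv & H1 & H2 & H3 & _ & _ & Hbd & _).
      rewrite Hbd. specialize (Hg v ltac:(lra)). unfold gg in Hg.
      assert (0 < 8 * (1 + lam) * b v) by (apply Rmult_lt_0_compat; lra).
      assert (0 < 8 * (1 + lam) * b v * (1 - rr d lam a b c v - 2 * ((1 + lam) * b v))) by (apply Rmult_lt_0_compat; lra).
      lra. }
  assert ((1 + lam) * b T1a <= (1 + lam) * b u) by (apply Rmult_le_compat_l; lra).
  specialize (Hg u ltac:(lra)). unfold gg in Hg. lra.
Qed.

Lemma c_incr d lam c0 rho eps K1 K2 a b c : Hyp d lam c0 rho eps K1 K2 a b c ->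
  forall t, 0 <= t -> (forall v, 0 < v < t -> rr d lam a b c v <= 1 /\ Rmin rho eps <= 1 - rr d lam a b c v) ->
  c 0 <= c t.
Proof.
  intros HS t Ht H.
  pose proof HS as [Hsol Hd Hlam HK1 HK2 Hlo Hhi Hc0 Hrho Heps Hx Hc2 Hc3 Hc4 Hc5 Hc6 Hc7 Hc9].
  pose proof Hsol as [Ha0 [Hb0 [Hcc0 Hder]]].
  assert (0 * (t - 0) <= ln (c t) - ln (c 0)).
  { apply (growth_ge c (cdot d lam a b c)); auto.
    - intros v Hv. split. apply (pw _ _ _ _ _ _ _ _ _ _ HS v ltac:(lra)). apply (Hder v ltac:(lra)).
    - intros v Hv. destruct (H v Hv) as [H1 H2].
      destruct (pw _ _ _ _ _ _ _ _ _ _ HS v ltac:(lra)) as (Hav & Hbv & Hcv & _ & _ & _ & _ & _ & _ & _ & H5 & _).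
      specialize (H5 H1 H2). assert (0 < Rmin rho eps) by (apply Rmin_pos; lra). nra. }
  apply ln_le_inv. apply (pw _ _ _ _ _ _ _ _ _ _ HS 0 ltac:(lra)). apply (pw _ _ _ _ _ _ _ _ _ _ HS t Ht). lra.
Qed.

Lemma phaseB d lam c0 rho eps K1 K2 a b c T1a : Hyp d lam c0 rho eps K1 K2 a b c ->
  0 < T1a -> rho / 2 <= (1 + lam) * b T1a -> (forall u, 0 <= u < T1a -> rr d lam a b c u < rho) ->
  forall t, T1a + 2 < t -> (forall u, T1a <= u <= t -> 0 < gg d lam a b c u) -> False.
Proof.
  intros HS HT HB Hbel t Ht Hg.
  pose proof (basics _ _ _ _ _ _ _ _ _ _ HS) as Hb.
  pose proof HS as [Hsol Hd Hlam HK1 HK2 Hlo Hhi Hc0 Hrho Heps Hx Hc2 Hc3 Hc4 Hc5 Hc6 Hc7 Hc9].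
  pose proof Hsol as [Ha0 [Hb0 [Hcc0 Hder]]].
  assert (Hk : Rmin rho eps <= rho) by apply Rmin_l.
  assert (HgB : forall v, T1a <= v <= t -> rho / 2 <= (1 + lam) * b v /\ rr d lam a b c v < 1 /\ rho <= 1 - rr d lam a b c v).
  { intros v Hv. apply (goodB _ _ _ _ _ _ _ _ _ _ T1a HS HT HB v ltac:(lra)). intros w Hw. apply Hg. lra. }
  assert (Hci : forall v, 0 <= v <= t -> c 0 <= c v).
  { intros v Hv. apply (c_incr _ _ _ _ _ _ _ _ _ _ HS v ltac:(lra)). intros w Hw.
    destruct (Rlt_or_le w T1a) as [Hw1|Hw1].
    - specialize (Hbel w ltac:(lra)). lra.
    - destruct (HgB w ltac:(lra)) as [_ [H1 H2]]. lra. }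
  set (L := 1 + lam) in *.
  set (n := INR d - 2) in *.
  set (g' := fun u => - adot d lam a b c u - 3 * L * bdot d lam a b c u - n * cdot d lam a b c u).
  assert (Hdg : forall u, 0 <= u -> derivable_pt_lim (gg d lam a b c) u (g' u)).
  { intros u Hu. apply (proj2 (derivs _ _ _ _ _ _ Hsol u Hu)). }
  assert (Hpwv : forall v, T1a <= v <= t ->
     0 <= adot d lam a b c v /\ 4 * rho * c v <= cdot d lam a b c v /\ 0 < c v /\ 0 < b v /\
     g' v = - adot d lam a b c v - 24 * L * (L * b v) * gg d lam a b c v - n * cdot d lam a b c v).
  { intros v Hv. destruct (HgB v Hv) as [H1 [H2 H3]].
    destruct (pw _ _ _ _ _ _ _ _ _ _ HS v ltac:(lra)) as (Hav & Hbv & Hcv & _ & _ & _ & _ & _ & Hbd & H4 & _ & H6).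
    split; [apply H4; lra|]. split; [apply H6; lra|]. split; auto. split; auto.
    unfold g'. rewrite Hbd. unfold gg. fold L. ring. }
  set (t1 := T1a + 1).
  assert (Hs1 : ln (gg d lam a b c t1) - ln (gg d lam a b c T1a) <= (- 12 * L * rho) * (t1 - T1a)).
  { apply (growth_le _ g'). unfold t1; lra.
    - intros v Hv. split. apply Hg; unfold t1 in *; lra. apply Hdg; lra.
    - intros v Hv. destruct (Hpwv v ltac:(unfold t1 in *; lra)) as (H1 & H2 & H3 & H4 & H5).
      rewrite H5. destruct (HgB v ltac:(unfold t1 in *; lra)) as [H6 _].
      assert (Hgv := Hg v ltac:(unfold t1 in *; lra)).
      assert (0 <= 4 * rho * c v) by (apply Rmult_le_pos; lra).
      assert (0 <= n * cdot d lam a b c v) by (apply Rmult_le_pos; lra).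
      assert (24 * L * (rho / 2) * gg d lam a b c v <= 24 * L * (L * b v) * gg d lam a b c v).
      { apply Rmult_le_compat_r. lra. apply Rmult_le_compat_l; unfold L in *; lra. }
      lra. }
  assert (HgT : gg d lam a b c T1a <= 1).
  { unfold gg; cbv beta. destruct (pw _ _ _ _ _ _ _ _ _ _ HS T1a ltac:(lra)) as (Hav & Hbv & Hcv & H1 & H2 & H3 & _).
    assert (0 < L * b T1a) by (apply Rmult_lt_0_compat; unfold L in *; lra). fold L. lra. }
  assert (HlgT : ln (gg d lam a b c T1a) <= 0).
  { rewrite <- ln_1. apply ln_le_mono; auto. apply Hg; lra. }
  set (C0 := n * c 0).
  assert (HC0 : C0 = n * mu d lam c0) by (unfold C0; rewrite Hcc0; auto).
  assert (HC0p : 0 < C0) by (rewrite HC0; unfold n in *; nra).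
  assert (Hl4 : - 12 * L * rho <= ln (4 * rho * C0)).
  { rewrite ln_mult by (try apply Rmult_lt_0_compat; lra).
    assert (ln (rho0 d c0 / (3 * (1 + K2))) <= ln C0) by (apply ln_le_mono; [apply Rdiv_lt_0_compat; lra| rewrite HC0; unfold n in *; lra]).
    unfold Rdiv in H. rewrite ln_mult, ln_Rinv in H by (try apply Rinv_0_lt_compat; lra).
    assert (K1 * ln (INR d) * rho <= L * rho) by (apply Rmult_le_compat_r; unfold L in *; lra).
    lra. }
  assert (Hgt1 : gg d lam a b c t1 <= 4 * rho * C0).
  { apply ln_le_inv. apply Hg; unfold t1; lra. apply Rmult_lt_0_compat; lra.
    replace (t1 - T1a) with 1 in Hs1 by (unfold t1; ring). lra. }
  assert (Hs2 : gg d lam a b c (t1 + 1) - gg d lam a b c t1 <= (- (4 * rho * C0)) * (t1 + 1 - t1)).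
  { apply (mvt_le _ g'). lra.
    - intros v Hv. apply Hdg. unfold t1 in *; lra.
    - intros v Hv. destruct (Hpwv v ltac:(unfold t1 in *; lra)) as (H1 & H2 & H3 & H4 & H5).
      rewrite H5. assert (Hgv := Hg v ltac:(unfold t1 in *; lra)).
      assert (0 < L * (L * b v)) by (apply Rmult_lt_0_compat; unfold L in *; try apply Rmult_lt_0_compat; lra).
      assert (0 <= 24 * L * (L * b v) * gg d lam a b c v) by (apply Rmult_le_pos; [|lra]; assert (0 <= L) by (unfold L in *; lra); nra).
      assert (c 0 <= c v) by (apply Hci; unfold t1 in *; lra).
      assert (n * (4 * rho * c 0) <= n * cdot d lam a b c v).
      { apply Rmult_le_compat_l. unfold n in *; lra. assert (4 * rho * c 0 <= 4 * rho * c v) by (apply Rmult_le_compat_l; lra). lra. }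
      unfold C0. lra. }
  assert (Hfin := Hg (t1 + 1) ltac:(unfold t1; lra)). lra.
Qed.

Lemma bdot_gg d lam c0 rho eps K1 K2 a b c : Hyp d lam c0 rho eps K1 K2 a b c ->
  forall u, 0 <= u -> (gg d lam a b c u <= 0 <-> bdot d lam a b c u <= 0).
Proof.
  intros HS u Hu.
  pose proof HS as [Hsol Hd Hlam HK1 HK2 Hlo Hhi Hc0 Hrho Heps Hx Hc2 Hc3 Hc4 Hc5 Hc6 Hc7 Hc9].
  destruct (pw _ _ _ _ _ _ _ _ _ _ HS u Hu) as (Hav & Hbv & Hcv & _ & _ & _ & _ & _ & Hbd & _).
  rewrite Hbd. assert (0 < 8 * (1 + lam) * b u) by (apply Rmult_lt_0_compat; lra).
  unfold gg. cbv beta. split; intro H'.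
  - assert (8 * (1 + lam) * b u * (1 - rr d lam a b c u - 2 * ((1 + lam) * b u)) <= 8 * (1 + lam) * b u * 0)
      by (apply Rmult_le_compat_l; lra). lra.
  - destruct (Rle_or_lt (1 - rr d lam a b c u - 2 * ((1 + lam) * b u)) 0); auto.
    assert (0 < 8 * (1 + lam) * b u * (1 - rr d lam a b c u - 2 * ((1 + lam) * b u))) by (apply Rmult_lt_0_compat; lra). lra.
Qed.

Lemma gg_cont d lam c0 a b c : solves d lam c0 a b c -> forall t, 0 <= t -> continuity_pt (gg d lam a b c) t.
Proof. intros Hs t Ht. apply (dcont _ _ _ (proj2 (derivs _ _ _ _ _ _ Hs t Ht))). Qed.

Lemma rr_cont d lam c0 a b c : solves d lam c0 a b c -> forall t, 0 <= t -> continuity_pt (rr d lam a b c) t.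
Proof. intros Hs t Ht. apply (dcont _ _ _ (proj1 (derivs _ _ _ _ _ _ Hs t Ht))). Qed.

Lemma T1_props d lam c0 rho eps K1 K2 a b c T1a : Hyp d lam c0 rho eps K1 K2 a b c ->
  0 < T1a -> rho / 2 <= (1 + lam) * b T1a -> (forall u, 0 <= u < T1a -> rr d lam a b c u < rho) ->
  rr d lam a b c T1a <= rho ->
  exists T1, is_inf (fun t => T1a <= t /\ bdot d lam a b c t <= 0) T1 /\ T1a <= T1 <= T1a + 2 /\
    (forall u, T1a <= u < T1 -> 0 < gg d lam a b c u) /\ 0 <= gg d lam a b c T1.
Proof.
  intros HS HT HB Hbel HrT.
  pose proof HS as [Hsol Hd Hlam HK1 HK2 Hlo Hhi Hc0 Hrho Heps Hx Hc2 Hc3 Hc4 Hc5 Hc6 Hc7 Hc9].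
  destruct (inf_exists (fun t => T1a <= t /\ bdot d lam a b c t <= 0) T1a) as [T Hi].
  { apply NNPP; intro Hn. apply (phaseB _ _ _ _ _ _ _ _ _ _ T1a HS HT HB Hbel (T1a + 3)). lra.
    intros u Hu. apply Rnot_le_lt. intro H'. apply Hn. exists u. split. lra.
    apply (bdot_gg _ _ _ _ _ _ _ _ _ _ HS u ltac:(lra)); auto. }
  { intros y [Hy _]; auto. }
  assert (HT0 : T1a <= T) by (apply (proj2 Hi); intros y [Hy _]; auto).
  assert (Hbel2 : forall u, T1a <= u < T -> 0 < gg d lam a b c u).
  { intros u Hu. apply Rnot_le_lt. intro H'.
    assert (T <= u); [|lra]. apply (proj1 Hi). split. lra.
    apply (bdot_gg _ _ _ _ _ _ _ _ _ _ HS u ltac:(lra)); auto. }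
  exists T. split; auto. split; [split; auto|]. 
  { apply Rnot_lt_le. intro Hlt.
    apply (phaseB _ _ _ _ _ _ _ _ _ _ T1a HS HT HB Hbel ((T + T1a + 2) / 2)). lra.
    intros u Hu. apply Hbel2. lra. }
  split; auto.
  destruct HT0 as [Hlt|Heq].
  - apply (left_ge _ T T1a). apply (gg_cont _ _ _ _ _ _ Hsol); lra. auto.
    intros t Ht. left. apply Hbel2. lra.
  - subst T. unfold gg. destruct (pw _ _ _ _ _ _ _ _ _ _ HS T1a ltac:(lra)) as (Hav & Hbv & Hcv & H1 & H2 & H3 & _). lra.
Qed.

Lemma good d lam c0 rho eps K1 K2 a b c T1a T1 : Hyp d lam c0 rho eps K1 K2 a b c ->
  0 < T1a -> rho / 2 <= (1 + lam) * b T1a -> (forall u, 0 <= u < T1a -> rr d lam a b c u < rho) ->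
  T1a <= T1 -> (forall u, T1a <= u < T1 -> 0 < gg d lam a b c u) ->
  forall u, 0 <= u -> (T1 <= u -> rr d lam a b c u < 1 - eps) ->
  rr d lam a b c u < 1 /\ Rmin rho eps <= 1 - rr d lam a b c u.
Proof.
  intros HS HT HB Hbel HT1 Hg u Hu Hr.
  pose proof HS as [Hsol Hd Hlam HK1 HK2 Hlo Hhi Hc0 Hrho Heps Hx Hc2 Hc3 Hc4 Hc5 Hc6 Hc7 Hc9].
  assert (Rmin rho eps <= rho) by apply Rmin_l. assert (Rmin rho eps <= eps) by apply Rmin_r.
  destruct (Rlt_or_le u T1a) as [H1|H1].
  - specialize (Hbel u ltac:(lra)). lra.
  - destruct (Rlt_or_le u T1) as [H2|H2].
    + destruct (goodB _ _ _ _ _ _ _ _ _ _ T1a HS HT HB u H1) as [_ [H3 H4]].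
      intros v Hv. apply Hg. lra. lra.
    + specialize (Hr H2). lra.
Qed.

Lemma phaseC d lam c0 rho eps K1 K2 a b c : Hyp d lam c0 rho eps K1 K2 a b c ->
  forall t, 0 < t -> (forall v, 0 < v < t -> rr d lam a b c v < 1 /\ Rmin rho eps <= 1 - rr d lam a b c v) ->
  rr d lam a b c t <= 1 -> 4 * Rmin rho eps * t <= 2 * c0 * ln (ln (INR d)).
Proof.
  intros HS t Ht Hg Hrt.
  pose proof (basics _ _ _ _ _ _ _ _ _ _ HS) as Hb.
  pose proof HS as [Hsol Hd Hlam HK1 HK2 Hlo Hhi Hc0 Hrho Heps Hx Hc2 Hc3 Hc4 Hc5 Hc6 Hc7 Hc9].
  pose proof Hsol as [Ha0 [Hb0 [Hcc0 Hder]]].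
  assert (H1 : 4 * Rmin rho eps * (t - 0) <= ln (c t) - ln (c 0)).
  { apply (growth_ge c (cdot d lam a b c)). lra.
    - intros v Hv. split. apply (pw _ _ _ _ _ _ _ _ _ _ HS v ltac:(lra)). apply (Hder v ltac:(lra)).
    - intros v Hv. destruct (Hg v Hv) as [H1 H2].
      destruct (pw _ _ _ _ _ _ _ _ _ _ HS v ltac:(lra)) as (Hav & Hbv & Hcv & _ & _ & _ & _ & _ & _ & _ & H5 & _).
      apply H5; lra. }
  destruct (pw _ _ _ _ _ _ _ _ _ _ HS t ltac:(lra)) as (Hat & Hbt & Hct & _ & _ & H3 & _).
  assert (Hc0p := pw _ _ _ _ _ _ _ _ _ _ HS 0 ltac:(lra)).
  destruct Hc0p as (_ & _ & Hc0p & _).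
  assert (Hln1 : ln ((INR d - 2) * c t) <= 0).
  { rewrite <- ln_1. apply ln_le_mono. apply Rmult_lt_0_compat; lra. lra. }
  assert (Hln2 : ln (rho0 d c0 / (3 * (1 + K2))) <= ln ((INR d - 2) * c 0)).
  { apply ln_le_mono. apply Rdiv_lt_0_compat; lra. rewrite Hcc0. lra. }
  unfold Rdiv in Hln2. rewrite ln_mult, ln_Rinv in Hln2 by (try apply Rinv_0_lt_compat; lra).
  rewrite !ln_mult in * by lra. lra.
Qed.

Lemma T2a_props d lam c0 rho eps K1 K2 a b c T1a T1 : Hyp d lam c0 rho eps K1 K2 a b c ->
  0 < T1a -> rho / 2 <= (1 + lam) * b T1a -> (forall u, 0 <= u < T1a -> rr d lam a b c u < rho) ->
  T1a <= T1 -> (forall u, T1a <= u < T1 -> 0 < gg d lam a b c u) ->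
  exists T2a, is_inf (fun t => T1 <= t /\ 1 - eps <= rr d lam a b c t) T2a /\ T1 <= T2a /\
    1 - eps <= rr d lam a b c T2a /\ rr d lam a b c T2a <= 1 /\
    4 * Rmin rho eps * T2a <= 2 * c0 * ln (ln (INR d)) /\
    (forall u, T1 <= u < T2a -> rr d lam a b c u < 1 - eps).
Proof.
  intros HS HT HB Hbel HT1 Hg.
  pose proof HS as [Hsol Hd Hlam HK1 HK2 Hlo Hhi Hc0 Hrho Heps Hx Hc2 Hc3 Hc4 Hc5 Hc6 Hc7 Hc9].
  assert (Hk : 0 < Rmin rho eps) by (apply Rmin_pos; lra).
  assert (Hlx : 0 <= ln (ln (INR d))) by apply (basics _ _ _ _ _ _ _ _ _ _ HS).
  destruct (inf_exists (fun t => T1 <= t /\ 1 - eps <= rr d lam a b c t) T1) as [T Hi].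
  { apply NNPP; intro Hn.
    set (t := 2 * c0 * ln (ln (INR d)) / (4 * Rmin rho eps) + 1).
    assert (Ht : 2 * c0 * ln (ln (INR d)) / (4 * Rmin rho eps) >= 0).
    { apply Rle_ge, Rmult_le_pos. apply Rmult_le_pos; lra. left; apply Rinv_0_lt_compat; lra. }
    assert (Hgd : forall u, 0 <= u -> rr d lam a b c u < 1 /\ Rmin rho eps <= 1 - rr d lam a b c u).
    { intros u Hu. apply (good _ _ _ _ _ _ _ _ _ _ T1a T1 HS HT HB Hbel HT1 Hg u Hu).
      intros Hu1. apply Rnot_le_lt. intro H'. apply Hn. exists u. split; auto. }
    assert (4 * Rmin rho eps * t <= 2 * c0 * ln (ln (INR d))).
    { apply (phaseC _ _ _ _ _ _ _ _ _ _ HS). unfold t; lra.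
      intros v Hv. apply Hgd; lra. left. apply Hgd. unfold t; lra. }
    unfold t in H. rewrite Rmult_plus_distr_l in H.
    replace (4 * Rmin rho eps * (2 * c0 * ln (ln (INR d)) / (4 * Rmin rho eps))) with (2 * c0 * ln (ln (INR d))) in H by (field; lra).
    lra. }
  { intros y [Hy _]; auto. }
  assert (HT0 : T1 <= T) by (apply (proj2 Hi); intros y [Hy _]; auto).
  assert (Hbel2 : forall u, T1 <= u < T -> rr d lam a b c u < 1 - eps).
  { intros u Hu. apply Rnot_le_lt. intro H'. assert (T <= u) by (apply (proj1 Hi); split; lra). lra. }
  assert (Hgd : forall u, 0 <= u < T -> rr d lam a b c u < 1 /\ Rmin rho eps <= 1 - rr d lam a b c u).
  { intros u Hu. apply (good _ _ _ _ _ _ _ _ _ _ T1a T1 HS HT HB Hbel HT1 Hg u ltac:(lra)).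
    intros Hu1. apply Hbel2. lra. }
  assert (Hr1 : rr d lam a b c T <= 1).
  { apply (left_le _ T 0). apply (rr_cont _ _ _ _ _ _ Hsol); lra. lra. intros t Ht. left; apply Hgd; lra. }
  exists T. split; auto. split; auto. split.
  { apply (inf_closed _ T (rr d lam a b c) _ Hi). intros y [_ Hy]; auto. apply (rr_cont _ _ _ _ _ _ Hsol); lra. }
  split; auto. split; auto.
  apply (phaseC _ _ _ _ _ _ _ _ _ _ HS). lra. intros v Hv; apply Hgd; lra. auto.
Qed.

Lemma barrier d lam c0 rho eps K1 K2 a b c T1 T2a : Hyp d lam c0 rho eps K1 K2 a b c ->
  0 < T1 -> T1 <= T2a -> 0 <= gg d lam a b c T1 ->
  (forall u, T1 <= u < T2a -> rr d lam a b c u < 1 - eps) ->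
  forall t, T1 <= t <= T2a -> - (3 / ((1 + lam) * eps)) <= gg d lam a b c t.
Proof.
  intros HS HT1 HT12 Hg1 Hbel t Ht.
  pose proof HS as [Hsol Hd Hlam HK1 HK2 Hlo Hhi Hc0 Hrho Heps Hx Hc2 Hc3 Hc4 Hc5 Hc6 Hc7 Hc9].
  set (eta := 3 / ((1 + lam) * eps)).
  assert (Heta : 0 < eta) by (unfold eta; apply Rdiv_lt_0_compat; [lra| apply Rmult_lt_0_compat; lra]).
  apply Rnot_lt_le. intro Hlt.
  destruct (completeness (fun u => T1 <= u <= t /\ - eta <= gg d lam a b c u)) as [s Hs].
  { exists t. intros y Hy. lra. }
  { exists T1. split; lra. }
  assert (Hs1 : T1 <= s) by (apply (proj1 Hs); split; lra).
  assert (Hs2 : s <= t) by (apply (proj2 Hs); intros y Hy; lra).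
  assert (Hgs : - eta <= gg d lam a b c s).
  { apply (sup_closed _ s _ _ Hs). intros y [_ Hy]; auto. apply (gg_cont _ _ _ _ _ _ Hsol); lra. }
  assert (Hst : s < t) by (destruct Hs2 as [|<-]; auto; lra).
  assert (Hab : forall u, s < u <= t -> gg d lam a b c u < - eta).
  { intros u Hu. apply Rnot_le_lt. intro H'. assert (u <= s) by (apply (proj1 Hs); split; lra). lra. }
  set (g' := fun u => - adot d lam a b c u - 3 * (1 + lam) * bdot d lam a b c u - (INR d - 2) * cdot d lam a b c u).
  assert (gg d lam a b c s < gg d lam a b c t).
  { apply (mvt_gt _ g'); auto.
    - intros u Hu. apply (proj2 (derivs _ _ _ _ _ _ Hsol u ltac:(lra))).
    - intros v Hv.
      destruct (pw _ _ _ _ _ _ _ _ _ _ HS v ltac:(lra)) as (Hav & Hbv & Hcv & H1 & H2 & H3 & H4 & H5 & Hbd & _).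
      assert (Hrv : rr d lam a b c v < 1 - eps) by (apply Hbel; lra).
      assert (Hgv := Hab v ltac:(lra)).
      assert (Hr : rr d lam a b c v = a v + (1 + lam) * b v + (INR d - 2) * c v) by reflexivity.
      assert (HB : eps / 2 < (1 + lam) * b v) by (unfold gg in Hgv; cbv beta in Hgv; lra).
      assert (Hprod : eps / 2 * eta < (1 + lam) * b v * (- gg d lam a b c v)).
      { apply Rmult_le_0_lt_compat; lra. }
      assert (Hq : 24 * (1 + lam) * (eps / 2 * eta) = 36) by (unfold eta in *; field; lra).
      assert (HLp : 0 < (1 + lam)) by lra.
      assert (24 * (1 + lam) * (eps / 2 * eta) < 24 * (1 + lam) * ((1 + lam) * b v * (- gg d lam a b c v))) by (apply Rmult_lt_compat_l; lra).
      assert (Hnc : (INR d - 2) * cdot d lam a b c v <= 8 * ((INR d - 2) * c v)) by (assert (0 <= INR d - 2) by lra; nra).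
      unfold g'. rewrite Hbd. unfold gg in *. cbv beta in *.
      assert (0 < (INR d - 2) * c v) by (apply Rmult_lt_0_compat; lra).
      nra. }
  specialize (Hab t ltac:(lra)). lra.
Qed.

Lemma sqrt_exp y : 0 < y -> sqrt y = exp (ln y / 2).
Proof.
  intros Hy. rewrite <- (sqrt_square (exp (ln y / 2))) by (left; apply exp_pos).
  f_equal. rewrite <- exp_plus. replace (ln y / 2 + ln y / 2) with (ln y) by field. rewrite exp_ln; auto.
Qed.

Lemma main_lemma d lam c0 rho eps K1 K2 a b c dl : Hyp d lam c0 rho eps K1 K2 a b c ->
  0 < dl <= 1/8 ->
  ln 3 - ln dl + 24 * (c0 * ln (ln (INR d)) / (2 * Rmin rho eps)) <= ln (INR d) / 2 ->
  let r := rr d lam a b c in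
  exists T1a T1 T2a : R,
    is_inf (fun t => 0 <= t /\ rho <= r t) T1a /\
    is_inf (fun t => T1a <= t /\ bdot d lam a b c t <= 0) T1 /\
    is_inf (fun t => T1 <= t /\ 1 - eps <= r t) T2a /\
    c0 * ln (ln (INR d)) / 16 <= T2a - T1 /\ T2a - T1 <= c0 * ln (ln (INR d)) / (2 * Rmin rho eps) /\
    2 / 3 - eps - dl <= (INR d - 2) * c T2a /\ 1/3 <= (INR d - 2) * c T2a <= 1 /\
    mu d lam c0 <= a T2a /\ 
    ln (a T2a) - ln (mu d lam c0) <= 24 * (c0 * ln (ln (INR d)) / (2 * Rmin rho eps)) /\
    a T2a <= dl /\ 3 * (sqrt (INR d) * a T2a) <= dl /\
    Align d a b c T2a <= 3 * (sqrt (INR d) * a T2a).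
Proof.
  intros HS Hdl Hc8 r.
  pose proof (basics _ _ _ _ _ _ _ _ _ _ HS) as Hb.
  pose proof HS as [Hsol Hd Hlam HK1 HK2 Hlo Hhi Hc0 Hrho Heps Hx Hc2 Hc3 Hc4 Hc5 Hc6 Hc7 Hc9].
  pose proof Hsol as [Ha0 [Hb0 [Hcc0 Hder]]].
  assert (Hk : 0 < Rmin rho eps) by (apply Rmin_pos; lra).
  destruct (T1a_props _ _ _ _ _ _ _ _ _ _ HS) as (T1a & Hi1 & HT1a & Hbel1 & HB & HrT).
  destruct (T1_props _ _ _ _ _ _ _ _ _ _ T1a HS ltac:(lra) HB Hbel1 HrT) as (T1 & Hi2 & HT1 & Hg1 & Hgg1).
  destruct (T2a_props _ _ _ _ _ _ _ _ _ _ T1a T1 HS ltac:(lra) HB Hbel1 ltac:(lra) Hg1) as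
    (T2a & Hi3 & HT2 & Hre & Hr1 & HT2b & Hbel3).
  exists T1a, T1, T2a. split; [exact Hi1|]. split; [exact Hi2|]. split; [exact Hi3|].
  assert (Hbar := barrier _ _ _ _ _ _ _ _ _ _ T1 T2a HS ltac:(lra) HT2 Hgg1 Hbel3 T2a ltac:(lra)).
  assert (Heta : 3 / ((1 + lam) * eps) <= 1 / 12).
  { assert (36 / eps <= 1 + lam) by lra.
    assert (36 <= (1 + lam) * eps).
    { apply (Rmult_le_compat_r eps) in H; [|lra]. unfold Rdiv in H. rewrite Rmult_assoc, Rinv_l in H; lra. }
    apply (Rmult_le_reg_r ((1 + lam) * eps)). lra. unfold Rdiv. rewrite Rmult_assoc, Rinv_l; lra. }
  assert (HT2b' : T2a <= c0 * ln (ln (INR d)) / (2 * Rmin rho eps)).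
  { apply (Rmult_le_reg_l (4 * Rmin rho eps)). lra.
    replace (4 * Rmin rho eps * (c0 * ln (ln (INR d)) / (2 * Rmin rho eps))) with (2 * c0 * ln (ln (INR d))) by (field; lra). lra. }
  destruct (pw _ _ _ _ _ _ _ _ _ _ HS T2a ltac:(lra)) as (Ha & Hbp & Hc & H1 & H2 & H3 & _).
  assert (Hamu : 0 * (T2a - 0) <= ln (a T2a) - ln (a 0)).
  { apply (growth_ge a (adot d lam a b c)). lra.
    - intros v Hv. split. apply (pw _ _ _ _ _ _ _ _ _ _ HS v ltac:(lra)). apply (Hder v ltac:(lra)).
    - intros v Hv. destruct (pw _ _ _ _ _ _ _ _ _ _ HS v ltac:(lra)) as (Hav & _ & _ & _ & _ & _ & _ & _ & _ & H4 & _).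
      assert (rr d lam a b c v < 1 /\ Rmin rho eps <= 1 - rr d lam a b c v).
      { apply (good _ _ _ _ _ _ _ _ _ _ T1a T1 HS ltac:(lra) HB Hbel1 ltac:(lra) Hg1 v ltac:(lra)).
        intros Hv1. apply Hbel3. lra. }
      destruct (H4 ltac:(lra)). lra. }
  rewrite Ha0 in Hamu.
  assert (Hamu2 : mu d lam c0 <= a T2a) by (apply ln_le_inv; lra).
  destruct (global_growth _ _ _ _ _ _ _ _ _ _ HS T2a ltac:(lra)) as [Hag [_ Hcg]].
  set (E := 24 * (c0 * ln (ln (INR d)) / (2 * Rmin rho eps))) in *.
  assert (HaE : a T2a <= mu d lam c0 * exp E).
  { apply (Rle_trans _ _ _ Hag). apply Rmult_le_compat_l. lra. apply exp_le_mono. unfold E; lra. }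
  assert (Hlna : ln (a T2a) - ln (mu d lam c0) <= E).
  { assert (ln (a T2a) <= ln (mu d lam c0 * exp E)) by (apply ln_le_mono; lra).
    rewrite ln_mult, ln_exp in H by (try apply exp_pos; lra). lra. }
  assert (Hd0 : 0 < INR d) by lra.
  assert (Hsq : sqrt (INR d) = exp (ln (INR d) / 2)) by (apply sqrt_exp; lra).
  assert (Hsq1 : 1 <= sqrt (INR d)) by (rewrite <- sqrt_1; apply sqrt_le_1_alt; lra).
  assert (Hmud : mu d lam c0 <= exp (- ln (INR d))).
  { rewrite exp_Ropp, exp_ln by lra. apply (Rle_trans _ (rho0 d c0 / INR d)). lra.
    unfold Rdiv. rewrite <- (Rmult_1_l (/ INR d)) at 2. apply Rmult_le_compat_r. left; apply Rinv_0_lt_compat; lra. lra. }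
  assert (H3a : 3 * (sqrt (INR d) * a T2a) <= dl).
  { apply (Rle_trans _ (3 * (sqrt (INR d) * (exp (- ln (INR d)) * exp E)))).
    - apply Rmult_le_compat_l. lra. apply Rmult_le_compat_l. lra.
      apply (Rle_trans _ _ _ HaE). apply Rmult_le_compat_r. left; apply exp_pos. auto.
    - rewrite Hsq. rewrite <- (exp_ln 3) by lra. rewrite <- (exp_ln dl) by lra.
      rewrite <- !exp_plus. apply exp_le_mono. lra. }
  assert (Haδ : a T2a <= dl).
  { assert (a T2a <= sqrt (INR d) * a T2a) by (rewrite <- (Rmult_1_l (a T2a)) at 1; apply Rmult_le_compat_r; lra). lra. }
  assert (Hrr : r T2a = a T2a + (1 + lam) * b T2a + (INR d - 2) * c T2a) by reflexivity.
  unfold gg in Hbar. cbv beta in Hbar. fold r in Hbar, Hre, Hr1, H1, H2, H3.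
  assert (HC1 : 1/3 <= (INR d - 2) * c T2a) by lra.
  assert (HC2 : 2 / 3 - eps - dl <= (INR d - 2) * c T2a) by lra.
  assert (HT1pos : 0 <= T1) by lra.
  assert (Hlow : c0 * ln (ln (INR d)) / 16 <= T2a - T1).
  { specialize (Hcg T1 ltac:(lra)).
    destruct (global_growth _ _ _ _ _ _ _ _ _ _ HS T1 ltac:(lra)) as [_ [HcT1 _]].
    destruct (pw _ _ _ _ _ _ _ _ _ _ HS T1 ltac:(lra)) as (_ & _ & HcT1p & _).
    assert (HlC1 : ln ((INR d - 2) * c T1) <= ln (rho0 d c0) + 8 * (/ K1 + 2)).
    { apply ln_le_of. apply Rmult_lt_0_compat; lra. rewrite exp_plus, exp_ln by lra.
      apply (Rle_trans _ _ _ HcT1). apply Rmult_le_compat_l. lra. apply exp_le_mono. lra. }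
    assert (HlC2 : ln (1/3) <= ln ((INR d - 2) * c T2a)) by (apply ln_le_mono; lra).
    unfold Rdiv in HlC2. rewrite Rmult_1_l, ln_Rinv in HlC2 by lra.
    rewrite !ln_mult in HlC1, HlC2 by lra. lra. }
  split; [exact Hlow|]. split; [lra|]. split; [exact HC2|]. split; [split; lra|].
  split; [exact Hamu2|]. split; [exact Hlna|]. split; [exact Haδ|]. split; [exact H3a|].
  unfold Align. set (S := a T2a ^ 2 + b T2a ^ 2 + (INR d - 2) * c T2a ^ 2).
  assert (HS0 : 1 <= 9 * INR d * S).
  { unfold S. assert (0 <= a T2a ^ 2 + b T2a ^ 2) by nra.
    assert ((INR d - 2) * ((INR d - 2) * c T2a ^ 2) <= INR d * ((INR d - 2) * c T2a ^ 2)).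
    { apply Rmult_le_compat_r. assert (0 <= INR d - 2) by lra. nra. lra. }
    nra. }
  assert (HSp : 0 < S) by nra.
  assert (Hs9 : sqrt (9 * INR d * S) = 3 * (sqrt (INR d) * sqrt S)).
  { rewrite !sqrt_mult by lra. replace 9 with (3 * 3) by ring. rewrite sqrt_square by lra. ring. }
  assert (1 <= 3 * (sqrt (INR d) * sqrt S)) by (rewrite <- Hs9, <- sqrt_1; apply sqrt_le_1_alt; lra).
  assert (HsS : 0 < sqrt S) by (apply sqrt_lt_R0; lra).
  apply (Rmult_le_reg_r (sqrt S)); auto. unfold Rdiv. rewrite Rmult_assoc, Rinv_l by lra.
  nra.
Qed.

Lemma div_le_mul X c0 y : 0 < c0 -> X / c0 <= y -> X <= c0 * y.
Proof. intros H1 H2. apply (Rmult_le_compat_l c0) in H2; [|lra]. unfold Rdiv in H2.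
  replace (c0 * (X * / c0)) with X in H2 by (field; lra). auto. Qed.

Theorem propositionB5 (lam : nat -> R) (c0 rho eps : R) :
  0 < c0 -> 0 < rho < 1 / 12 -> 0 < eps <= 1 / 4 ->
  (forall d : nat, (3 <= d)%nat -> 0 < lam d) ->
  (exists (K1 K2 : R) (D : nat), 0 < K1 /\ 0 < K2 /\
     forall d : nat, (D <= d)%nat -> K1 * ln (INR d) <= lam d <= K2 * INR d) ->
  exists k1 k2 kc1 kc2 Ka KA : R,
    0 < k1 /\ 0 < k2 /\ 0 < kc1 /\ 0 < kc2 /\ 0 < Ka /\ 0 < KA /\
    forall delta : R, 0 < delta ->
    exists D0 : nat, forall d : nat, (3 <= d)%nat -> (D0 <= d)%nat ->
    forall a b c : R -> R, solves d (lam d) c0 a b c ->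
    let r := rr d (lam d) a b c in
    exists T1a T1 T2a : R,
      is_inf (fun t => 0 <= t /\ rho <= r t) T1a /\
      is_inf (fun t => T1a <= t /\ bdot d (lam d) a b c t <= 0) T1 /\
      is_inf (fun t => T1 <= t /\ 1 - eps <= r t) T2a /\
      k1 * ln (/ rho0 d c0) <= T2a - T1 <= k2 * ln (/ rho0 d c0) /\
      k1 * ln (ln (INR d)) <= T2a - T1 <= k2 * ln (ln (INR d)) /\
      2 / 3 - eps - delta <= (INR d - 2) * c T2a /\
      kc1 / INR d <= c T2a <= kc2 / INR d /\
      (exists e : R, Rabs e <= Ka /\
         a T2a = mu d (lam d) c0 * Rpower (rho0 d c0) (- e)) /\
      a T2a <= delta /\
      Align d a b c T2a <= KA * (sqrt (INR d) * a T2a) /\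
      Align d a b c T2a <= delta.
Proof.
  intros Hc0 Hrho Heps Hlam [K1 [K2 [D [HK1 [HK2 HK]]]]].
  set (k0 := Rmin rho eps).
  assert (Hk0 : 0 < k0) by (apply Rmin_pos; lra).
  exists (Rmin 1 c0 / 16), ((1 + c0) / (2 * k0)), (1/3), 3, (12 / k0), 3.
  assert (Hm : 0 < Rmin 1 c0) by (apply Rmin_pos; lra).
  split. lra. split. apply Rdiv_lt_0_compat; lra. split. lra. split. lra.
  split. apply Rdiv_lt_0_compat; lra. split. lra.
  intros delta Hdelta.
  set (dl := Rmin delta (1/8)).
  assert (Hdl : 0 < dl <= 1/8) by (split; [apply Rmin_pos; lra| apply Rmin_r]).
  assert (Hdld : dl <= delta) by apply Rmin_l.
  set (E3 := exp (24 * (/ K1 + 2))).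
  assert (HE3 : 0 < E3) by apply exp_pos.
  assert (Hev : ev (fun d =>
     (D <= d)%nat /\ 3 <= INR d /\ 1 <= ln (INR d) /\ 1 <= ln (ln (INR d)) /\
     ln (1 + K2) + c0 * ln (ln (INR d)) <= 5 * ln (INR d) /\
     ln (4 * E3 / rho) / c0 <= ln (ln (INR d)) /\
     2 + 4 / k0 <= INR d /\
     ln (3 * (1 + K2)) - ln (4 * rho) + c0 * ln (ln (INR d)) <= (12 * K1 * rho) * ln (INR d) /\
     ln (3 * (1 + K2)) / c0 <= ln (ln (INR d)) /\
     36 / eps / K1 <= ln (INR d) /\
     2 * (ln 3 + 8 * (/ K1 + 2)) / c0 <= ln (ln (INR d)) /\
     (ln 3 - ln dl) + (24 * c0 / (2 * k0)) * ln (ln (INR d)) <= (1/2) * ln (INR d))).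
  { repeat apply ev_and.
    - exists D; auto.
    - apply ev1. - apply ev2. - apply ev3.
    - apply ev4; lra.
    - apply ev3. - apply ev1.
    - apply ev4. lra. assert (0 < K1 * rho) by (apply Rmult_lt_0_compat; lra). lra.
    - apply ev3. - apply ev2. - apply ev3.
    - apply ev4. apply Rdiv_lt_0_compat; lra. lra. }
  destruct Hev as [D0 HD0]. exists D0.
  intros d Hd3 HdD0 a b c Hsol r.
  destruct (HD0 d HdD0) as (HdD & Hd & Hx & Hlx & Hc2 & Hc3 & Hc4 & Hc5 & Hc6 & Hc7 & Hc9 & Hc8).
  destruct (HK d HdD) as [Hlo Hhi].
  assert (Hlamd := Hlam d Hd3).
  assert (Hr0 : rho0 d c0 = exp (- c0 * ln (ln (INR d)))) by reflexivity.
  assert (HS : Hyp d (lam d) c0 rho eps K1 K2 a b c).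
  { constructor; auto; try lra.
    - rewrite Hr0. apply div_le_mul in Hc3; auto.
      assert (exp (- c0 * ln (ln (INR d))) <= exp (- ln (4 * E3 / rho))) by (apply exp_le_mono; lra).
      rewrite exp_Ropp, exp_ln in H by (apply Rdiv_lt_0_compat; lra).
      assert (/ (4 * E3 / rho) = rho / (4 * E3)) by (field; lra). rewrite H0 in H.
      apply (Rmult_le_compat_r (4 * E3)) in H; [|lra]. unfold Rdiv in H.
      replace (rho * / (4 * E3) * (4 * E3)) with rho in H by (field; lra). fold E3. lra.
    - assert (0 < INR d - 2) by lra. apply (Rmult_le_reg_r (INR d - 2)); auto.
      unfold Rdiv. rewrite Rmult_assoc, Rinv_l by lra. fold k0.
      assert (4 / k0 <= INR d - 2) by lra.
      apply (Rmult_le_compat_r k0) in H0; [|lra]. unfold Rdiv in H0. rewrite Rmult_assoc, Rinv_l in H0 by lra. lra.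
    - apply div_le_mul; auto.
    - apply (Rmult_le_compat_l K1) in Hc7; [|lra]. unfold Rdiv in Hc7 at 1.
      replace (K1 * (36 / eps * / K1)) with (36 / eps) in Hc7 by (field; lra). auto.
    - apply div_le_mul in Hc9; auto. lra. }
  assert (Hc8' : ln 3 - ln dl + 24 * (c0 * ln (ln (INR d)) / (2 * Rmin rho eps)) <= ln (INR d) / 2).
  { fold k0. replace (24 * (c0 * ln (ln (INR d)) / (2 * k0))) with (24 * c0 / (2 * k0) * ln (ln (INR d))) by (field; lra). lra. }
  destruct (main_lemma _ _ _ _ _ _ _ _ _ _ dl HS Hdl Hc8') as
    (T1a & T1 & T2a & Hi1 & Hi2 & Hi3 & Hlow & Hup & HC2 & HC & Hamu & Hlna & Had & H3a & Hal).
  fold k0 in Hup, Hlna.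
  exists T1a, T1, T2a. split; [exact Hi1|]. split; [exact Hi2|]. split; [exact Hi3|].
  assert (Hlr : ln (/ rho0 d c0) = c0 * ln (ln (INR d))).
  { rewrite ln_Rinv by (rewrite Hr0; apply exp_pos). rewrite Hr0, ln_exp. ring. }
  rewrite Hlr.
  set (lx := ln (ln (INR d))) in *.
  assert (Hm1 : Rmin 1 c0 <= 1) by apply Rmin_l.
  assert (Hm2 : Rmin 1 c0 <= c0) by apply Rmin_r.
  assert (Hclx : 0 <= c0 * lx) by (apply Rmult_le_pos; lra).
  assert (Hk2 : c0 * lx / (2 * k0) = (1 / (2 * k0)) * (c0 * lx)) by (field; lra).
  assert (Hk2' : 0 < 1 / (2 * k0)) by (apply Rdiv_lt_0_compat; lra).
  split; [split|].
  { apply (Rle_trans _ (c0 * lx / 16)); auto.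
    assert (Rmin 1 c0 * (c0 * lx) <= 1 * (c0 * lx)) by (apply Rmult_le_compat_r; lra). lra. }
  { apply (Rle_trans _ _ _ Hup). rewrite Hk2. apply Rmult_le_compat_r; auto.
    unfold Rdiv. apply Rmult_le_compat_r. left; apply Rinv_0_lt_compat; lra. lra. }
  split; [split|].
  { apply (Rle_trans _ (c0 * lx / 16)); auto. unfold Rdiv.
    assert (Rmin 1 c0 * lx <= c0 * lx) by (apply Rmult_le_compat_r; lra). lra. }
  { apply (Rle_trans _ _ _ Hup). rewrite Hk2.
    replace ((1 + c0) / (2 * k0) * lx) with (1 / (2 * k0) * ((1 + c0) * lx)) by (field; lra).
    apply Rmult_le_compat_l. lra. nra. }
  split. lra.
  assert (Hdp : 0 < INR d) by lra.
  assert (HT1a0 : 0 <= T1a) by (apply (proj2 Hi1); intros y Hy; apply Hy).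
  assert (HT1 : T1a <= T1) by (apply (proj2 Hi2); intros y Hy; apply Hy).
  assert (HT2 : T1 <= T2a) by (apply (proj2 Hi3); intros y Hy; apply Hy).
  assert (Hmu : 0 < mu d (lam d) c0) by apply (basics _ _ _ _ _ _ _ _ _ _ HS).
  destruct (positivity _ _ _ _ _ _ Hsol Hmu T2a ltac:(lra)) as [Hap [Hbp Hcp]].
  split; [split|].
  { apply (Rmult_le_reg_r (INR d)); auto. unfold Rdiv. rewrite Rmult_assoc, Rinv_l by lra.
    assert ((INR d - 2) * c T2a <= INR d * c T2a) by (apply Rmult_le_compat_r; lra). lra. }
  { apply (Rmult_le_reg_r (INR d)); auto. unfold Rdiv. rewrite Rmult_assoc, Rinv_l by lra.
    assert (INR d / 3 * c T2a <= (INR d - 2) * c T2a) by (apply Rmult_le_compat_r; lra). lra. }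
  split.
  { exists ((ln (a T2a) - ln (mu d (lam d) c0)) / (c0 * lx)).
    assert (Hclx' : 0 < c0 * lx) by (apply Rmult_lt_0_compat; lra).
    assert (Hln0 : ln (mu d (lam d) c0) <= ln (a T2a)) by (apply ln_le_mono; lra).
    split.
    - rewrite Rabs_right. 2: { apply Rle_ge. apply Rmult_le_pos. lra. left; apply Rinv_0_lt_compat; lra. }
      apply (Rmult_le_reg_r (c0 * lx)); auto. unfold Rdiv. rewrite Rmult_assoc, Rinv_l by lra.
      replace (12 * / k0 * (c0 * lx)) with (24 * (c0 * lx / (2 * k0))) by (field; lra). lra.
    - unfold Rpower. rewrite Hr0, ln_exp.
      replace (- ((ln (a T2a) - ln (mu d (lam d) c0)) / (c0 * lx)) * (- c0 * lx)) with
        (ln (a T2a) - ln (mu d (lam d) c0)) by (field; lra).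
      unfold Rminus. rewrite exp_plus, exp_Ropp, !exp_ln by lra. field. lra. }
  split. lra. split. exact Hal. lra.
Qed.
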